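(* There is no binary relation $\succsim$ on $l_\infty$ that satisfies Weak order, Monotonicity, Continuity, ICRP, Convexity, ISU and IPIS and is represented by a constant equivalent $I:l_\infty\to\mathbb R$.
   Context: $l_\infty$: real bounded sequences indexed by $\mathbb N$; $\theta\in\mathbb R$ also a constant sequence; $x\ge y$ coordinatewise. A constant equivalent representing $\succsim$ is $I$ with $x\sim I(x)$ and $x\succsim y\iff I(x)\ge I(y)$. For a bijection $\sigma:\mathbb N\to\mathbb N$, $d_\sigma=(d_{\sigma(0)},d_{\sigma(1)},\dots)$. Weak order: complete, transitive. Monotonicity: $x\ge y\Rightarrow x\succsim y$, $1\succ0$. Continuity: for $x\succsim y\succsim z$ the sets $\{\alpha\in[0,1]:\alpha x+(1-\alpha)z\succsim y\}$, $\{\alpha:y\succsim\alpha x+(1-\alpha)z\}$ are closed. ICRP: $x\succsim y\Rightarrow x+\theta\succsim y+\theta$. Convexity: $x\succsim\theta,y\succsim\theta\Rightarrow\lambda x+(1-\lambda)y\succsim\theta$ for $\lambda\in[0,1]$. ISU: $x\succsim y$, $\alpha\ge0\Rightarrow\alpha x\succsim\alpha y$. IPIS: for every bijection $\sigma:\mathbb N\to\mathbb N$ and $x,d\in l_\infty$, $x+d\succsim x$ implies $x+d_\sigma\succsim x$. *)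

(* Defs.v *)
From Stdlib Require Import Reals Lra.
Open Scope R_scope.

Definition bounded (x : nat -> R) : Prop := exists M, forall n, Rabs (x n) <= M.

Record linf := mkLinf { lseq :> nat -> R; lbnd : bounded lseq }.

Lemma bounded_const (c : R) : bounded (fun _ => c).
Proof. exists (Rabs c); intros; lra. Qed.

Lemma bounded_add (x y : linf) : bounded (fun n => x n + y n).
Proof.
  destruct (lbnd x) as [Mx Hx]; destruct (lbnd y) as [My Hy].
  exists (Mx + My); intro n.
  eapply Rle_trans; [apply Rabs_triang|]. specialize (Hx n); specialize (Hy n); lra.
Qed.

Lemma bounded_scale (a : R) (x : linf) : bounded (fun n => a * x n).
Proof.
  destruct (lbnd x) as [Mx Hx]. exists (Rabs a * Mx); intro n.
  rewrite Rabs_mult. apply Rmult_le_compat_l; [apply Rabs_pos | apply Hx].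
Qed.

Lemma bounded_comp (f : nat -> nat) (x : linf) : bounded (fun n => x (f n)).
Proof. destruct (lbnd x) as [Mx Hx]. exists Mx; intro n; apply Hx. Qed.

Definition lconst (c : R) : linf := mkLinf (fun _ => c) (bounded_const c).
Definition ladd (x y : linf) : linf := mkLinf (fun n => x n + y n) (bounded_add x y).
Definition lscale (a : R) (x : linf) : linf := mkLinf (fun n => a * x n) (bounded_scale a x).
Definition lperm (s : nat -> nat) (d : linf) : linf :=
  mkLinf (fun n => d (s n)) (bounded_comp s d).
Definition lmix (a : R) (x z : linf) : linf := ladd (lscale a x) (lscale (1 - a) z).

Definition lge (x y : linf) : Prop := forall n, x n >= y n.

Definition bijection (s : nat -> nat) : Prop :=
  exists g : nat -> nat, (forall n, g (s n) = n) /\ (forall n, s (g n) = n).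

Section Props.
Variable pref : linf -> linf -> Prop.

Definition indiff x y := pref x y /\ pref y x.
Definition spref x y := pref x y /\ ~ pref y x.

Definition WeakOrder : Prop :=
  (forall x y, pref x y \/ pref y x) /\
  (forall x y z, pref x y -> pref y z -> pref x z).

Definition Monotonicity : Prop :=
  (forall x y, lge x y -> pref x y) /\ spref (lconst 1) (lconst 0).

Definition Continuity : Prop :=
  forall x y z, pref x y -> pref y z ->
    closed_set (fun a => 0 <= a <= 1 /\ pref (lmix a x z) y) /\
    closed_set (fun a => 0 <= a <= 1 /\ pref y (lmix a x z)).

Definition ICRP : Prop :=
  forall x y (t : R), pref x y -> pref (ladd x (lconst t)) (ladd y (lconst t)).

Definition Convexity : Prop :=
  forall x y (t l : R), pref x (lconst t) -> pref y (lconst t) -> 0 <= l <= 1 ->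
    pref (lmix l x y) (lconst t).

Definition ISU : Prop :=
  forall x y (a : R), pref x y -> 0 <= a -> pref (lscale a x) (lscale a y).

Definition IPIS : Prop :=
  forall (s : nat -> nat) (x d : linf), bijection s ->
    pref (ladd x d) x -> pref (ladd x (lperm s d)) x.

Definition ConstEquivRep (I : linf -> R) : Prop :=
  (forall x, indiff x (lconst (I x))) /\
  (forall x y, pref x y <-> I x >= I y).
End Props.

(* Main.v *)
Require Import Defs.
From Stdlib Require Import Reals.
From Stdlib Require Import Arith Lia Lra Cantor.
Local Open Scope nat_scope.

Lemma ev2 j : Nat.even (2*j) = true.
Proof. rewrite Nat.even_mul; reflexivity. Qed.
Lemma ev21 j : Nat.even (2*j+1) = false.
Proof. rewrite Nat.add_1_r, Nat.even_succ, <- Nat.negb_even, ev2; reflexivity. Qed.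
Lemma d2 j : Nat.div2 (2*j) = j.
Proof. apply Nat.div2_double. Qed.
Lemma d21 j : Nat.div2 (2*j+1) = j.
Proof. rewrite Nat.add_1_r; apply Nat.div2_succ_double. Qed.
Lemma dec_ev n : Nat.even n = true -> n = 2 * Nat.div2 n.
Proof. intro H. rewrite (Nat.div2_odd n) at 1. rewrite <- Nat.negb_even, H. simpl. lia. Qed.
Lemma dec_od n : Nat.even n = false -> n = 2 * Nat.div2 n + 1.
Proof. intro H. rewrite (Nat.div2_odd n) at 1. rewrite <- Nat.negb_even, H. simpl. lia. Qed.
Lemma ev_p2 k : Nat.even (k+2) = Nat.even k.
Proof. rewrite Nat.even_add. destruct (Nat.even k); reflexivity. Qed.

Definition sg (n : nat) : nat :=
  if Nat.even n then 2 * to_nat (Nat.div2 n, 0) + 1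
  else let (j, k) := of_nat (Nat.div2 n) in
    if Nat.even k then 2 * to_nat (j, k+2) + 1
    else if k =? 1 then 2 * j else 2 * to_nat (j, k-2) + 1.

Definition gg (n : nat) : nat :=
  if Nat.even n then 2 * to_nat (Nat.div2 n, 1) + 1
  else let (j, k) := of_nat (Nat.div2 n) in
    if Nat.even k then (if k =? 0 then 2 * j else 2 * to_nat (j, k-2) + 1)
    else 2 * to_nat (j, k+2) + 1.

Lemma gs n : gg (sg n) = n.
Proof.
  unfold sg. destruct (Nat.even n) eqn:E.
  - unfold gg. rewrite ev21, d21, cancel_of_to. simpl. symmetry; apply dec_ev; auto.
  - pose proof (cancel_to_of (Nat.div2 n)) as T.
    destruct (of_nat (Nat.div2 n)) as [j k] eqn:J.
    destruct (Nat.even k) eqn:K.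
    + unfold gg. rewrite ev21, d21, cancel_of_to, ev_p2, K.
      replace (k + 2 =? 0) with false by (symmetry; apply Nat.eqb_neq; lia).
      replace (k+2-2) with k by lia. rewrite T. symmetry; apply dec_od; auto.
    + destruct (k =? 1) eqn:K1.
      * apply Nat.eqb_eq in K1; subst k. unfold gg. rewrite ev2, d2. rewrite T. symmetry; apply dec_od; auto.
      * apply Nat.eqb_neq in K1. unfold gg. rewrite ev21, d21, cancel_of_to.
        assert (Nat.even (k-2) = false).
        { destruct k as [|[|k]]; [discriminate|lia|]. replace (S (S k) - 2) with k by lia.
          rewrite <- K. replace (S (S k)) with (k+2) by lia. rewrite ev_p2; auto. }
        rewrite H. replace (k-2+2) with k.
        2:{ destruct k as [|[|k]]; [discriminate|lia|lia]. }
        rewrite T. symmetry; apply dec_od; auto.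
Qed.

Lemma sgg n : sg (gg n) = n.
Proof.
  unfold gg. destruct (Nat.even n) eqn:E.
  - unfold sg. rewrite ev21, d21, cancel_of_to. simpl. symmetry; apply dec_ev; auto.
  - pose proof (cancel_to_of (Nat.div2 n)) as T.
    destruct (of_nat (Nat.div2 n)) as [j k] eqn:J.
    destruct (Nat.even k) eqn:K.
    + destruct (k =? 0) eqn:K0.
      * apply Nat.eqb_eq in K0; subst k. unfold sg. rewrite ev2, d2. rewrite T. symmetry; apply dec_od; auto.
      * apply Nat.eqb_neq in K0. unfold sg. rewrite ev21, d21, cancel_of_to.
        assert (Nat.even (k-2) = true).
        { destruct k as [|[|k]]; [lia|discriminate|]. replace (S (S k) - 2) with k by lia.
          rewrite <- K. replace (S (S k)) with (k+2) by lia. rewrite ev_p2; auto. }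
        rewrite H. replace (k-2+2) with k.
        2:{ destruct k as [|[|k]]; [lia|discriminate|lia]. }
        rewrite T. symmetry; apply dec_od; auto.
    + unfold sg. rewrite ev21, d21, cancel_of_to, ev_p2, K.
      replace (k + 2 =? 1) with false by (symmetry; apply Nat.eqb_neq; lia).
      replace (k+2-2) with k by lia. rewrite T. symmetry; apply dec_od; auto.
Qed.

Definition vb (n : nat) : bool :=
  if Nat.even n then false else let (j,k) := of_nat (Nat.div2 n) in Nat.even k.

Lemma vb_prop n : (Nat.even n = true -> vb n = false /\ vb (sg n) = true) /\
                  (Nat.even n = false -> vb n = vb (sg n)).
Proof.
  split; intro E.
  - unfold vb at 1; rewrite E; split; auto.
    unfold sg, vb. rewrite E, ev21, d21, cancel_of_to. reflexivity.
  - unfold vb at 1; rewrite E. unfold sg.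
    rewrite E. destruct (of_nat (Nat.div2 n)) as [j k] eqn:J.
    destruct (Nat.even k) eqn:K.
    + unfold vb. rewrite ev21, d21, cancel_of_to, ev_p2, K. reflexivity.
    + destruct (k =? 1) eqn:K1.
      * unfold vb. rewrite ev2. reflexivity.
      * apply Nat.eqb_neq in K1. unfold vb. rewrite ev21, d21, cancel_of_to.
        destruct k as [|[|k]]; [discriminate|lia|]. replace (S (S k) - 2) with k by lia.
        rewrite <- K. replace (S (S k)) with (k+2) by lia. rewrite ev_p2; auto.
Qed.

Definition sw (n : nat) : nat := if Nat.even n then S n else pred n.
Lemma sw_inv n : sw (sw n) = n.
Proof.
  unfold sw. destruct (Nat.even n) eqn:E.
  - rewrite Nat.even_succ, <- Nat.negb_even, E. reflexivity.
  - destruct n as [|m]; [discriminate|]. simpl.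
    rewrite Nat.even_succ, <- Nat.negb_even in E. destruct (Nat.even m); [reflexivity|discriminate].
Qed.
Lemma sw_par n : Nat.even (sw n) = negb (Nat.even n).
Proof.
  unfold sw. destruct (Nat.even n) eqn:E.
  - rewrite Nat.even_succ, <- Nat.negb_even, E. reflexivity.
  - destruct n as [|m]; [discriminate|]. simpl.
    rewrite Nat.even_succ, <- Nat.negb_even in E. destruct (Nat.even m); [reflexivity|discriminate].
Qed.

Local Open Scope R_scope.
Definition vf (n : nat) : R := if vb n then 1 else 0.
Lemma vf_bnd : Defs.bounded vf.
Proof. exists 1; intro n; unfold vf; destruct (vb n); rewrite ?Rabs_R1, ?Rabs_R0; lra. Qed.
Definition vL : linf := mkLinf vf vf_bnd.
Definition ef (n : nat) : R := if Nat.even n then -1 else 0.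
Lemma ef_bnd : Defs.bounded ef.
Proof. exists 1; intro n; unfold ef; destruct (Nat.even n); unfold Rabs; destruct (Rcase_abs _); lra. Qed.
Definition eL : linf := mkLinf ef ef_bnd.

Theorem proposition8 :
  ~ (exists (pref : linf -> linf -> Prop) (I : linf -> R),
       WeakOrder pref /\ Monotonicity pref /\ Continuity pref /\ ICRP pref /\
       Convexity pref /\ ISU pref /\ IPIS pref /\ ConstEquivRep pref I).
Proof.
  intros [pref [I [[Hc Ht] [[Hm Hsp] [_ [Hicrp [Hcv [Hisu [Hipis [Hrep _]]]]]]]]]].
  assert (PW : forall x y : linf, (forall n, x n >= y n) -> pref x y) by (intros; apply Hm; exact H).
  set (a := I vL).
  destruct (Hrep vL) as [Hva Hav]. fold a in Hva, Hav.
  set (d := ladd (lscale (-1) vL) (lconst a)).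
  assert (H1 : pref (ladd vL d) vL).
  { apply Ht with (lconst a); [|exact Hav]. apply PW; intro n; simpl; lra. }
  assert (Hb : bijection sg) by (exists gg; split; [apply gs|apply sgg]).
  pose proof (Hipis sg vL d Hb H1) as H2.
  assert (H3 : pref (ladd eL (lconst a)) (lconst a)).
  { apply Ht with (ladd vL (lperm sg d)); [|apply Ht with vL; auto].
    apply PW; intro n; simpl. unfold vf, ef.
    destruct (vb_prop n) as [P1 P2]. destruct (Nat.even n) eqn:E.
    - destruct (P1 eq_refl) as [-> ->]. lra.
    - rewrite (P2 eq_refl). destruct (vb (sg n)); lra. }
  pose proof (Hicrp _ _ (-a) H3) as H4.
  assert (H5 : pref eL (lconst 0)).
  { apply Ht with (ladd (ladd eL (lconst a)) (lconst (- a))).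
    - apply PW; intro n; simpl; lra.
    - apply Ht with (ladd (lconst a) (lconst (- a))); auto. apply PW; intro n; simpl; lra. }
  assert (Hsw : bijection sw) by (exists sw; split; apply sw_inv).
  assert (H6 : pref (ladd (lconst 0) eL) (lconst 0)).
  { apply Ht with eL; auto. apply PW; intro n; simpl; lra. }
  pose proof (Hipis sw (lconst 0) eL Hsw H6) as H7.
  assert (H8 : pref (lperm sw eL) (lconst 0)).
  { apply Ht with (ladd (lconst 0) (lperm sw eL)); auto. apply PW; intro n; simpl; lra. }
  assert (H9 : pref (lmix (1/2) eL (lperm sw eL)) (lconst 0)) by (apply Hcv; auto; lra).
  assert (H10 : pref (lconst (-1/2)) (lconst 0)).
  { apply Ht with (lmix (1/2) eL (lperm sw eL)); auto. apply PW; intro n; simpl.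
    unfold ef. rewrite sw_par. destruct (Nat.even n); simpl; lra. }
  pose proof (Hisu _ _ 2 H10 ltac:(lra)) as H11.
  pose proof (Hicrp _ _ 1 H11) as H12.
  apply (proj2 Hsp).
  apply Ht with (ladd (lscale 2 (lconst (-1/2))) (lconst 1)).
  - apply PW; intro n; simpl; lra.
  - apply Ht with (ladd (lscale 2 (lconst 0)) (lconst 1)); auto. apply PW; intro n; simpl; lra.
Qed.
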